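(* Let $\{(\mathbf{x}^k,\mathbf{y}^k,\boldsymbol{\gamma}^k)\}$ be generated by the two-block linearized ADMM below, applied under the standing assumptions (i)–(iv) below. Then for every $k\ge1$, $$L_\beta(\mathbf{x}^{k+1},\mathbf{y}^{k+1},\boldsymbol{\gamma}^{k+1})-L_\beta(\mathbf{x}^{k+1},\mathbf{y}^{k+1},\boldsymbol{\gamma}^k)=\frac{1}{\beta}\|\boldsymbol{\gamma}^{k+1}-\boldsymbol{\gamma}^k\|^2\le C_2\|\mathbf{x}^{k+1}-\mathbf{x}^k\|^2+C_3\|\mathbf{y}^{k+1}-\mathbf{y}^k\|^2+C_4\|\mathbf{y}^k-\mathbf{y}^{k-1}\|^2,$$ where $L_w=L_g+L_h$, $\lambda_{\mathbf{B}^{\rm T}\mathbf{B}}$ is the smallest eigenvalue of $\mathbf{B}^{\rm T}\mathbf{B}$, $C_2=\frac{3L_w^2}{\beta\lambda_{\mathbf{B}^{\rm T}\mathbf{B}}}$, $C_3=\frac{3L_y^2}{\beta\lambda_{\mathbf{B}^{\rm T}\mathbf{B}}}$ and $C_4=\frac{3(L_w^2+L_y^2)}{\beta\lambda_{\mathbf{B}^{\rm T}\mathbf{B}}}$.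
   Context: Problem: minimize $g(\mathbf{x},\mathbf{y})+f(\mathbf{x})+h(\mathbf{y})$ s.t. $\mathbf{A}\mathbf{x}+\mathbf{B}\mathbf{y}=\mathbf{0}$, $\mathbf{x}\in\mathbb{R}^p$, $\mathbf{y}\in\mathbb{R}^q$, $\mathbf{A}\in\mathbb{R}^{n\times p}$, $\mathbf{B}\in\mathbb{R}^{n\times q}$. Standing assumptions: (i) $\nabla h$ is $L_h$-Lipschitz; (ii) $\nabla g$ is $L_g$-Lipschitz; (iii) $g+f+h$ is lower bounded on the feasible set $\{\mathbf{A}\mathbf{x}+\mathbf{B}\mathbf{y}=\mathbf{0}\}$ and coercive w.r.t. $\mathbf{y}$ over it; (iv) $\mathbf{B}$ has full column rank and $\mathrm{Im}(\mathbf{A})\subset\mathrm{Im}(\mathbf{B})$. $L_\beta(\mathbf{x},\mathbf{y},\boldsymbol{\gamma})=g(\mathbf{x},\mathbf{y})+f(\mathbf{x})+h(\mathbf{y})+\langle\boldsymbol{\gamma},\mathbf{A}\mathbf{x}+\mathbf{B}\mathbf{y}\rangle+\frac{\beta}{2}\|\mathbf{A}\mathbf{x}+\mathbf{B}\mathbf{y}\|^2$. Algorithm (parameters $L_x,L_y,\beta>0$): $\mathbf{x}^{k+1}\in\arg\min\bar f^k$, $\mathbf{y}^{k+1}=\arg\min\bar h^k$, $\boldsymbol{\gamma}^{k+1}=\boldsymbol{\gamma}^k+\beta(\mathbf{A}\mathbf{x}^{k+1}+\mathbf{B}\mathbf{y}^{k+1})$, where $\bar f^k(\mathbf{x})=f(\mathbf{x})+\langle\boldsymbol{\gamma}^k,\mathbf{A}\mathbf{x}\rangle+\frac{L_x}{2}\|\mathbf{x}-\mathbf{x}^k\|^2+\langle\mathbf{x}-\mathbf{x}^k,\nabla_{\mathbf{x}}g(\mathbf{x}^k,\mathbf{y}^k)+\beta\mathbf{A}^{\rm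 T}(\mathbf{A}\mathbf{x}^k+\mathbf{B}\mathbf{y}^k)\rangle$, $\bar h^k(\mathbf{y})=\langle\boldsymbol{\gamma}^k,\mathbf{B}\mathbf{y}\rangle+\frac{L_y}{2}\|\mathbf{y}-\mathbf{y}^k\|^2+\frac{\beta}{2}\|\mathbf{A}\mathbf{x}^{k+1}+\mathbf{B}\mathbf{y}\|^2+\langle\mathbf{y}-\mathbf{y}^k,\nabla_{\mathbf{y}}g(\mathbf{x}^{k+1},\mathbf{y}^k)+\nabla h(\mathbf{y}^k)\rangle$. *)

(* Defs.v *)
From HB Require Import structures.
From mathcomp Require Import all_boot all_order all_algebra.
From mathcomp Require Import all_classical all_reals all_analysis.
Set Implicit Arguments. Unset Strict Implicit. Unset Printing Implicit Defensive.
Import Order.TTheory GRing.Theory Num.Theory.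
Import numFieldNormedType.Exports.
Local Open Scope ring_scope.

Definition dotv {R : realType} {m : nat} (u v : 'cV[R]_m) : R :=
  \sum_(i < m) u i 0 * v i 0.
Definition enorm {R : realType} {m : nat} (v : 'cV[R]_m) : R :=
  Num.sqrt (dotv v v).

Definition is_gradient {R : realType} {m : nat} (G : 'cV[R]_m -> R^o)
  (gradG : 'cV[R]_m -> 'cV[R]_m) : Prop :=
  forall z, differentiable G z /\ forall v, 'd G z v = dotv (gradG z) v.

Definition lipschitz_grad {R : realType} {m : nat} (gradG : 'cV[R]_m -> 'cV[R]_m) (L : R) :=
  forall z1 z2, enorm (gradG z1 - gradG z2) <= L * enorm (z1 - z2).

Definition is_min_eigenvalue {R : realType} {m : nat} (M : 'M[R]_m) (lam : R) : Prop :=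
  eigenvalue M lam /\ forall a, eigenvalue M a -> lam <= a.

Definition Lbeta {R : realType} {n p q : nat}
  (g : 'cV[R]_(p + q) -> R) (f : 'cV[R]_p -> R) (h : 'cV[R]_q -> R)
  (A : 'M[R]_(n, p)) (B : 'M[R]_(n, q)) (beta : R)
  (x : 'cV[R]_p) (y : 'cV[R]_q) (gam : 'cV[R]_n) : R :=
  g (col_mx x y) + f x + h y + dotv gam (A *m x + B *m y)
  + beta / 2 * enorm (A *m x + B *m y) ^+ 2.

(* Main.v *)
Require Import Defs.
From HB Require Import structures.
From mathcomp Require Import all_boot all_order all_algebra.
From mathcomp Require Import all_classical all_reals all_analysis.
From mathcomp Require Import complex.
From mathcomp Require Import ring lra.
Import Order.TTheory GRing.Theory Num.Theory.
Import numFieldNormedType.Exports.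
Local Open Scope ring_scope.

Section Dot.
Variables (R : realType) (m : nat).
Implicit Types u v w : 'cV[R]_m.

Lemma dotvE u v : dotv u v = (u^T *m v) 0 0.
Proof. by rewrite /dotv mxE; apply: eq_bigr => i _; rewrite mxE. Qed.

Lemma dotvC u v : dotv u v = dotv v u.
Proof. by rewrite /dotv; apply: eq_bigr => i _; rewrite mulrC. Qed.

Lemma dotvDl u v w : dotv (u + v) w = dotv u w + dotv v w.
Proof. by rewrite /dotv -big_split; apply: eq_bigr => i _; rewrite mxE mulrDl. Qed.

Lemma dotvDr u v w : dotv w (u + v) = dotv w u + dotv w v.
Proof. by rewrite dotvC dotvDl !(dotvC w). Qed.

Lemma dotvZl a u v : dotv (a *: u) v = a * dotv u v.
Proof. by rewrite /dotv mulr_sumr; apply: eq_bigr => i _; rewrite mxE mulrA. Qed.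

Lemma dotvZr a u v : dotv u (a *: v) = a * dotv u v.
Proof. by rewrite dotvC dotvZl dotvC. Qed.

Lemma dotvNl u v : dotv (- u) v = - dotv u v.
Proof. by rewrite -scaleN1r dotvZl mulN1r. Qed.

Lemma dotvNr u v : dotv u (- v) = - dotv u v.
Proof. by rewrite dotvC dotvNl dotvC. Qed.

Lemma dotvBl u v w : dotv (u - v) w = dotv u w - dotv v w.
Proof. by rewrite dotvDl dotvNl. Qed.

Lemma dotvBr u v w : dotv w (u - v) = dotv w u - dotv w v.
Proof. by rewrite dotvDr dotvNr. Qed.

Lemma dotv0l v : dotv 0 v = 0.
Proof. by rewrite /dotv big1 // => i _; rewrite mxE mul0r. Qed.

Lemma dotv_ge0 v : 0 <= dotv v v.
Proof. by apply: sumr_ge0 => i _; rewrite -expr2 sqr_ge0. Qed.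

Lemma dotv_eq0 v : dotv v v = 0 -> v = 0.
Proof.
move=> /eqP; rewrite psumr_eq0; last by move=> i _; rewrite -expr2 sqr_ge0.
move=> /allP H; apply/matrixP => i j; rewrite ord1 mxE.
by have := H i (mem_index_enum _); rewrite /= mulf_eq0 orbb => /eqP.
Qed.

Lemma enorm2 v : enorm v ^+ 2 = dotv v v.
Proof. by rewrite /enorm sqr_sqrtr // dotv_ge0. Qed.

Lemma enorm_ge0 v : 0 <= enorm v.
Proof. exact: sqrtr_ge0. Qed.

End Dot.

Lemma dotv_mul (R : realType) k m (M : 'M[R]_(k, m)) u v :
  dotv u (M *m v) = dotv (M^T *m u) v.
Proof. by rewrite !dotvE trmx_mul trmxK mulmxA. Qed.

Lemma dotv_col (R : realType) p q (a c : 'cV[R]_p) (b d : 'cV[R]_q) :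
  dotv (col_mx a b) (col_mx c d) = dotv a c + dotv b d.
Proof.
rewrite /dotv big_split_ord /=; congr (_ + _); apply: eq_bigr => i _;
by rewrite ?col_mxEu ?col_mxEd.
Qed.

Lemma lip_ge0 (R : realType) m (G : 'cV[R]_m -> 'cV[R]_m) L :
  lipschitz_grad G L -> (0 < m)%N -> 0 <= L.
Proof.
move=> H m0.
have := H (const_mx 1) 0; rewrite subr0.
have e0 : 0 < enorm (const_mx 1 : 'cV[R]_m).
  rewrite /enorm sqrtr_gt0 /dotv.
  under eq_bigr do rewrite mxE mulr1.
  by rewrite sumr_const card_ord ltr0n.
have := @enorm_ge0 _ _ (G (const_mx 1) - G 0).
move=> h1 h2; have := le_trans h1 h2.
by rewrite pmulr_lge0.
Qed.

Lemma lip_sq (R : realType) m (G : 'cV[R]_m -> 'cV[R]_m) L z1 z2 :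
  lipschitz_grad G L -> 0 <= L ->
  dotv (G z1 - G z2) (G z1 - G z2) <= L ^+ 2 * dotv (z1 - z2) (z1 - z2).
Proof.
move=> H L0; rewrite -!enorm2.
have := H z1 z2; have := @enorm_ge0 _ _ (G z1 - G z2); have := @enorm_ge0 _ _ (z1 - z2).
move=> h1 h2 h3; nra.
Qed.

Lemma three (R : realType) m (a b c : 'cV[R]_m) :
  dotv (a + b + c) (a + b + c) <= 3 * (dotv a a + dotv b b + dotv c c).
Proof.
have := @dotv_ge0 _ _ (a - b); have := @dotv_ge0 _ _ (b - c); have := @dotv_ge0 _ _ (a - c).
rewrite !(dotvDl, dotvDr, dotvBl, dotvBr).
rewrite [dotv b a]dotvC [dotv c a]dotvC [dotv c b]dotvC.
rewrite !(dotvNl, dotvNr) [dotv b a]dotvC [dotv c a]dotvC [dotv c b]dotvC; lra.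
Qed.

Lemma dsub_le (R : realType) p q (v : 'cV[R]_(p + q)) :
  dotv (dsubmx v) (dsubmx v) <= dotv v v.
Proof.
rewrite -{3 4}(vsubmxK v) dotv_col.
have := @dotv_ge0 _ _ (usubmx v); lra.
Qed.

Lemma quad0 (R : realType) (a b : R) :
  (forall s, 0 <= s * a + s ^+ 2 * b) -> 0 <= a -> a = 0.
Proof.
move=> H a0.
pose e := `|b| + 1.
have e0 : 0 < e by rewrite /e ltr_wpDl.
have hb : b <= `|b| by exact: ler_norm.
have := H (- a / e).
have -> : - a / e * a + (- a / e) ^+ 2 * b = a ^+ 2 * (b - e) / e ^+ 2.
  by field; rewrite gt_eqF.
rewrite pmulr_lge0 ?invr_gt0 ?exprn_gt0 // /e => h.
nra.
Qed.

Lemma opt_quad (R : realType) n q (B : 'M[R]_(n, q)) (gam ax : 'cV[R]_n)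
  (y0 y1 c : 'cV[R]_q) (Ly beta : R) :
  (forall z : 'cV[R]_q,
     dotv gam (B *m y1) + Ly / 2 * enorm (y1 - y0) ^+ 2
     + beta / 2 * enorm (ax + B *m y1) ^+ 2 + dotv (y1 - y0) c
     <= dotv gam (B *m z) + Ly / 2 * enorm (z - y0) ^+ 2
     + beta / 2 * enorm (ax + B *m z) ^+ 2 + dotv (z - y0) c) ->
  B^T *m gam + Ly *: (y1 - y0) + beta *: (B^T *m (ax + B *m y1)) + c = 0.
Proof.
move=> H.
set G := B^T *m gam + _ + _ + c.
have hGG : dotv G G = dotv gam (B *m G) + Ly * dotv (y1 - y0) G
    + beta * dotv (ax + B *m y1) (B *m G) + dotv c G.
  by rewrite {1}/G !(dotvDl, dotvZl) !dotv_mul !mulmxDr !dotvDl.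
apply: dotv_eq0; apply: (@quad0 _ _ (Ly / 2 * dotv G G + beta / 2 * dotv (B *m G) (B *m G))); last exact: dotv_ge0.
move=> s; have := H (y1 + s *: G).
have -> : y1 + s *: G - y0 = (y1 - y0) + s *: G by rewrite addrAC.
have -> : ax + B *m (y1 + s *: G) = (ax + B *m y1) + s *: (B *m G)
  by rewrite mulmxDr -scalemxAr addrA.
rewrite mulmxDr -scalemxAr.
move: hGG; set d := y1 - y0; set r := ax + B *m y1; clearbody G d r.
move=> hGG h.
rewrite !enorm2 !(dotvDl, dotvDr, dotvZl, dotvZr) in h.
rewrite [dotv G d]dotvC [dotv (B *m G) r]dotvC [dotv G c]dotvC in h.
rewrite {1}hGG.
lra.
Qed.
Lemma zmod4 (V : zmodType) (a b c d : V) : a + b + c + d = 0 -> a + c = - (b + d).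
Proof. move=> H; apply/eqP; rewrite -addr_eq0 -H addrACA. by rewrite !addrA. Qed.
Lemma zmodN (V : zmodType) (a b c d : V) : - (a + b) + (c + d) = - a + c + (d - b).
Proof. by rewrite opprD addrACA [- b + d]addrC. Qed.
Lemma zmodB (V : zmodType) (a b c d : V) : (a + b) - (c + d) = (a - c) + (b - d).
Proof. by rewrite opprD addrACA. Qed.

Lemma rayleigh (R : rcfType) n (M : 'M[R]_n) (lam : R) :
  M^T = M -> (forall a, eigenvalue M a -> lam <= a) ->
  forall v : 'rV[R]_n, lam * (v *m v^T) 0 0 <= (v *m M *m v^T) 0 0.
Proof.
move=> Msym Hmin v.
pose f := real_complex R.
pose Mc := map_mx f M.
have Mreal : Mc \is a mxOver Num.real.
  by apply/mxOverP => i j; rewrite mxE complex_real.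
have Msymc : Mc \is symmetricmx.
  rewrite qualifE /= expr0 scale1r. rewrite map_mx_id // map_trmx Msym.
  by [].
have Mh := realsym_hermsym Msymc Mreal.
have /orthomx_spectralP Mdec := hermitian_normalmx Mh.
have dreal := hermitian_spectral_diag_real Mh.
set P := spectralmx Mc in Mdec.
set d := spectral_diag Mc in Mdec dreal.
have Pu : P \is unitarymx := spectral_unitarymx Mc.
have PPt : P *m (P ^t*)%sesqui = 1%:M by apply/unitarymxP.
have Punit : P \in unitmx := unitarymx_unit Pu.
have PtP : (P ^t*)%sesqui *m P = 1%:M by rewrite -invmx_unitary // mulVmx.
have PMc : P *m Mc = diag_mx d *m P.
  by rewrite {1}Mdec !mulmxA mulmxV // mul1mx.
have Hd : forall i, f lam <= d 0 i.
  move=> i.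
  have dr : d 0 i \is Num.real by move/mxOverP: dreal; apply.
  rewrite -(RRe_real dr) lecR; apply: Hmin.
  rewrite eigenvalue_root_char -(fmorph_root f) map_char_poly.
  rewrite -eigenvalue_root_char /= (RRe_real dr).
  apply/eigenvalueP; exists (row i P).
    rewrite -row_mul PMc mul_diag_mx; apply/rowP => j.
    by rewrite !mxE.
  apply/negP => /eqP H0.
  have : row i (P *m (P ^t*)%sesqui) = row i 1%:M by rewrite PPt.
  rewrite row_mul H0 mul0mx row1 => /rowP /(_ i); rewrite !mxE eqxx /=.
  by rewrite eqxx => /esym/eqP; rewrite oner_eq0.
have conjf : forall m k (A : 'M[R]_(m,k)), map_mx Num.conj (map_mx f A) = map_mx f A.
  by move=> m k A; apply/matrixP => i j; rewrite !mxE conj_Creal // complex_real.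
have E : forall A : 'M[R]_1, f (A 0 0) = (map_mx f A) 0 0 by move=> A; rewrite mxE.
rewrite -lecR rmorphM /=.
change ((f lam) * f ((v *m v^T) 0 0) <= f ((v *m M *m v^T) 0 0)).
rewrite !E !map_mxM.
set vc := map_mx f v.
have vcT : map_mx f v^T = (vc ^t*)%sesqui by rewrite -(conjf _ _ v^T) map_trmx.
rewrite vcT -/Mc Mdec invmx_unitary //.
set z := vc *m (P ^t*)%sesqui.
have zt : (z ^t*)%sesqui = P *m (vc ^t*)%sesqui by rewrite /z trmx_mul map_mxM trmxCK.
have -> : vc *m (vc ^t*)%sesqui = z *m (z ^t*)%sesqui.
  by rewrite zt /z mulmxA -(mulmxA vc) PtP mulmx1.
have -> : vc *m ((P ^t*)%sesqui *m diag_mx d *m P) *m (vc ^t*)%sesqui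
   = z *m diag_mx d *m (z ^t*)%sesqui by rewrite zt /z !mulmxA.
clear zt; clearbody z.
rewrite mul_mx_diag !mxE mulr_sumr; apply: ler_sum => j _.
rewrite !mxE [z 0 j * d 0 j]mulrC -mulrA.
apply: ler_wpM2r; [exact: mul_conjC_ge0 | exact: Hd].
Qed.

Lemma cross (R : realType) m (a b : 'cV[R]_m) (A0 B0 N : R) :
  0 <= A0 -> 0 <= B0 -> dotv a a <= A0 ^+ 2 * N -> dotv b b <= B0 ^+ 2 * N ->
  dotv (a + b) (a + b) <= (A0 + B0) ^+ 2 * N.
Proof.
move=> A0p B0p ha hb.
have aa := @dotv_ge0 _ _ a; have bb := @dotv_ge0 _ _ b.
rewrite !(dotvDl, dotvDr) [dotv b a]dotvC.
have [A0e|A0n] := eqVneq A0 0.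
  rewrite A0e in ha *.
  have a0 : a = 0 by apply: dotv_eq0; apply: le_anti; rewrite aa andbT; move: ha; rewrite expr2 !mul0r.
  rewrite a0 !dotv0l; nra.
have [B0e|B0n] := eqVneq B0 0.
  rewrite B0e in hb *.
  have b0 : b = 0 by apply: dotv_eq0; apply: le_anti; rewrite bb andbT; move: hb; rewrite expr2 !mul0r.
  rewrite b0 [dotv a 0]dotvC !dotv0l; nra.
have A0s : 0 < A0 by rewrite lt_neqAle eq_sym A0n.
have B0s : 0 < B0 by rewrite lt_neqAle eq_sym B0n.
have h := @dotv_ge0 _ _ (B0 *: a - A0 *: b).
rewrite !(dotvDl, dotvDr, dotvBl, dotvBr, dotvZl, dotvZr, dotvNl, dotvNr) [dotv b a]dotvC in h.
have N0 : 0 <= N.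
  have : 0 <= A0 ^+ 2 * N by apply: le_trans ha.
  by rewrite pmulr_rge0 // exprn_gt0.
have hab : A0 * B0 * (dotv a b - A0 * B0 * N) <= 0 by nra.
have : dotv a b - A0 * B0 * N <= 0.
  by move: hab; rewrite pmulr_rle0 // mulr_gt0.
nra.
Qed.

Lemma dsubB (R : realType) p q (u v : 'cV[R]_(p + q)) :
  dsubmx (u - v) = dsubmx u - dsubmx v.
Proof. by apply/matrixP => i j; rewrite !mxE. Qed.

Lemma dotvNN (R : realType) m (u v : 'cV[R]_m) : dotv (u - v) (u - v) = dotv (v - u) (v - u).
Proof. by rewrite -opprB dotvNl dotvNr opprK. Qed.

Theorem lemma7 (R : realType) (n p q : nat)
  (A : 'M[R]_(n, p)) (B : 'M[R]_(n, q))
  (g : 'cV[R]_(p + q) -> R) (gradg : 'cV[R]_(p + q) -> 'cV[R]_(p + q))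
  (f : 'cV[R]_p -> R)
  (h : 'cV[R]_q -> R) (gradh : 'cV[R]_q -> 'cV[R]_q)
  (Lg Lh Lx Ly beta lam : R)
  (x : nat -> 'cV[R]_p) (y : nat -> 'cV[R]_q) (gam : nat -> 'cV[R]_n) :
  (* (i) *)
  is_gradient h gradh -> lipschitz_grad gradh Lh ->
  (* (ii) *)
  is_gradient g gradg -> lipschitz_grad gradg Lg ->
  (* (iii) *)
  (exists c : R, forall (u : 'cV[R]_p) (v : 'cV[R]_q), A *m u + B *m v = 0 ->
      c <= g (col_mx u v) + f u + h v) ->
  (forall M : R, exists r : R, forall (u : 'cV[R]_p) (v : 'cV[R]_q),
      A *m u + B *m v = 0 -> r < enorm v -> M < g (col_mx u v) + f u + h v) ->
  (* (iv) *)
  \rank B = q ->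
  (forall u : 'cV[R]_p, exists v : 'cV[R]_q, A *m u = B *m v) ->
  (* parameters *)
  0 < Lx -> 0 < Ly -> 0 < beta ->
  is_min_eigenvalue (B^T *m B) lam ->
  (* the algorithm *)
  (forall k (z : 'cV[R]_p),
     let fbar := fun u : 'cV[R]_p =>
       f u + dotv (gam k) (A *m u) + Lx / 2 * enorm (u - x k) ^+ 2
       + dotv (u - x k) (usubmx (gradg (col_mx (x k) (y k)))
                         + beta *: (A^T *m (A *m x k + B *m y k))) in
     fbar (x k.+1) <= fbar z) ->
  (forall k (z : 'cV[R]_q),
     let hbar := fun v : 'cV[R]_q =>
       dotv (gam k) (B *m v) + Ly / 2 * enorm (v - y k) ^+ 2
       + beta / 2 * enorm (A *m x k.+1 + B *m v) ^+ 2
       + dotv (v - y k) (dsubmx (gradg (col_mx (x k.+1) (y k))) + gradh (y k)) in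
     hbar (y k.+1) <= hbar z) ->
  (forall k, gam k.+1 = gam k + beta *: (A *m x k.+1 + B *m y k.+1)) ->
  forall k : nat, (1 <= k)%N ->
  let Lw := Lg + Lh in
  let C2 := 3 * Lw ^+ 2 / (beta * lam) in
  let C3 := 3 * Ly ^+ 2 / (beta * lam) in
  let C4 := 3 * (Lw ^+ 2 + Ly ^+ 2) / (beta * lam) in
  Lbeta g f h A B beta (x k.+1) (y k.+1) (gam k.+1)
    - Lbeta g f h A B beta (x k.+1) (y k.+1) (gam k)
  = beta^-1 * enorm (gam k.+1 - gam k) ^+ 2
  /\ beta^-1 * enorm (gam k.+1 - gam k) ^+ 2
     <= C2 * enorm (x k.+1 - x k) ^+ 2 + C3 * enorm (y k.+1 - y k) ^+ 2
        + C4 * enorm (y k - y k.-1) ^+ 2.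
Proof.
move=> gh lh gg lg _ _ rankB ImAB Lx0 Ly0 b0 [eigl minl] Hx Hy Hgam k k1 Lw C2 C3 C4.
pose c j := dsubmx (gradg (col_mx (x j.+1) (y j))) + gradh (y j).
have opt : forall j, B^T *m gam j.+1 = - (Ly *: (y j.+1 - y j) + c j).
  move=> j.
  have := @opt_quad _ _ _ B (gam j) (A *m x j.+1) (y j) (y j.+1) (c j) Ly beta (fun z => Hy j z).
  by move=> /zmod4 <-; rewrite Hgam mulmxDr -scalemxAr.
set r := A *m x k.+1 + B *m y k.+1.
have dgam : gam k.+1 - gam k = beta *: r by rewrite Hgam addrC addKr.
split.
  rewrite /Lbeta dgam -/r Hgam -/r !enorm2 !(dotvDl, dotvZl, dotvZr).
  by field; rewrite gt_eqF.
destruct k as [|m]; first by [].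
have [v Hv vn0] := eigenvalueP eigl.
have q0 : (0 < q)%N.
  case: (posnP q) => // q0; exfalso; move/negP: vn0; apply; apply/eqP/rowP => i.
  by have := ltn_ord i; rewrite {2}q0.
have Lh0 := @lip_ge0 _ _ _ _ lh q0.
have Lg0 : 0 <= Lg by apply: (@lip_ge0 _ _ _ _ lg); rewrite addn_gt0 q0 orbT.
set X := dotv (x m.+2 - x m.+1) (x m.+2 - x m.+1).
set Y1 := dotv (y m.+2 - y m.+1) (y m.+2 - y m.+1).
set Y0 := dotv (y m.+1 - y m) (y m.+1 - y m).
have X0 : 0 <= X by apply: dotv_ge0.
have Y00 : 0 <= Y0 by apply: dotv_ge0.
set D := B^T *m (gam m.+2 - gam m.+1).
have Dsplit : D = - (Ly *: (y m.+2 - y m.+1)) + Ly *: (y m.+1 - y m) + (c m - c m.+1).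
  by rewrite /D mulmxBr !opt opprK zmodN.
have hD : dotv D D <= 3 * (Ly ^+ 2 * Y1 + Ly ^+ 2 * Y0 + Lw ^+ 2 * (X + Y0)).
  rewrite Dsplit; apply: le_trans (three _ _ _ _ _) _.
  rewrite !(dotvNl, dotvNr, dotvZl, dotvZr) -/Y1 -/Y0.
  suff : dotv (c m - c m.+1) (c m - c m.+1) <= Lw ^+ 2 * (X + Y0) by nra.
  rewrite /c zmodB -dsubB /Lw; apply: cross => //.
    apply: le_trans (dsub_le _ _ _ _) _; apply: le_trans (lip_sq _ _ _ _ _ _ lg Lg0) _.
    rewrite opp_col_mx add_col_mx dotv_col dotvNN [dotv (y m - _) _]dotvNN -/X -/Y0 //.
  apply: le_trans (lip_sq _ _ _ _ _ _ lh Lh0) _.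
  rewrite dotvNN -/Y0; nra.
have lam0 : 0 < lam.
  have hv : dotv (B *m v^T) (B *m v^T) = lam * dotv v^T v^T.
    rewrite !dotvE trmx_mul !trmxK !mulmxA -(mulmxA v) Hv -scalemxAl mxE.
    by [].
  rewrite ltNge; apply/negP => hl.
  have vv := @dotv_ge0 _ _ v^T.
  have : B *m v^T = 0.
    apply: dotv_eq0; apply/le_anti; rewrite dotv_ge0 andbT hv.
    by rewrite mulr_le0_ge0.
  move/(congr1 trmx); rewrite trmx_mul trmxK trmx0 => /eqP.
  rewrite mulmx_free_eq0 ?(negbTE vn0) //.
  by rewrite /row_free mxrank_tr rankB.
have [w Hw] := ImAB (x m.+2).
set u0 := beta *: (w + y m.+2).
have Bu : gam m.+2 - gam m.+1 = B *m u0 by rewrite dgam /r Hw -mulmxDr scalemxAr.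
clearbody u0.
set M := B^T *m B.
have Msym : M^T = M by rewrite /M trmx_mul trmxK.
have Ray := rayleigh _ _ _ _ Msym minl (u0^T).
rewrite trmxK -mulmxA -!dotvE in Ray.
have hD' : D = M *m u0 by rewrite /D Bu /M mulmxA.
have hE : dotv (gam m.+2 - gam m.+1) (gam m.+2 - gam m.+1) = dotv u0 (M *m u0).
  by rewrite Bu dotv_mul /M mulmxA dotvC.
have sq := @dotv_ge0 _ _ (M *m u0 - lam *: u0).
rewrite !(dotvDl, dotvDr, dotvBl, dotvBr, dotvZl, dotvZr, dotvNl, dotvNr) [dotv (M *m u0) u0]dotvC in sq.
have key : lam * dotv (gam m.+2 - gam m.+1) (gam m.+2 - gam m.+1) <= dotv D D.
  rewrite hE hD'; nra.
have key2 := le_trans key hD.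
rewrite /= !enorm2 -/X -/Y1 -/Y0 /C2 /C3 /C4.
move: key2; set E := dotv (gam m.+2 - gam m.+1) _ => key2.
have bl : 0 < beta * lam by rewrite mulr_gt0.
rewrite (_ : beta^-1 * E = (lam * E) / (beta * lam)); last by field; rewrite ?gt_eqF.
rewrite (_ : _ + _ + _ = 3 * (Ly ^+ 2 * Y1 + Ly ^+ 2 * Y0 + Lw ^+ 2 * (X + Y0)) / (beta * lam)); last first.
  by field; rewrite ?gt_eqF.
by apply: ler_wpM2r => //; rewrite invr_ge0 ltW.
Qed.
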